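(* Let $w_1,w_2\ge2$ be even. The map $\psi:V_{w_1,w_2}^{\mathbb Q}[I_D]\to W_{w_1+w_2}^{\mathbb Q}$, $P(X_1,X_2)\mapsto P(Z,Z)$, is well defined and surjective, and it admits a rational section: if $P(Z)=\sum_{m=0}^{w_1+w_2}\binom{w_1+w_2}{m}a_m(-Z)^{w_1+w_2-m}\in W_{w_1+w_2}^{\mathbb Q}$, then $Q(X_1,X_2)=\sum_{m_1=0}^{w_1}\sum_{m_2=0}^{w_2}\binom{w_1}{m_1}\binom{w_2}{m_2}a_{m_1+m_2}(-X_1)^{w_1-m_1}(-X_2)^{w_2-m_2}$ lies in $V_{w_1,w_2}^{\mathbb Q}[I_D]$ and satisfies $Q(Z,Z)=P(Z)$.
   Context: $\Gamma=PSL_2(\mathbb Z)$, $S=\pm\begin{pmatrix}0&-1\\1&0\end{pmatrix}$, $U=\pm\begin{pmatrix}0&1\\-1&1\end{pmatrix}$. For even $w$, $V_w^{\mathbb Q}$ is the space of rational polynomials of degree $\le w$ with action $\gamma.P(X)=(-cX+a)^wP\big(\frac{dX-b}{-cX+a}\big)$ for $\gamma=\pm\begin{pmatrix}a&b\\c&d\end{pmatrix}$; $W_w^{\mathbb Q}=\{P\in V_w^{\mathbb Q}:(1+S).P=(1+U+U^2).P=0\}$. $V_{w_1,w_2}^{\mathbb Q}$ is the space of rational polynomials in $X_1,X_2$ with $\deg_{X_j}\le w_j$, with action $(\gamma_1,\gamma_2).P(X_1,X_2)=(-c_1X_1+a_1)^{w_1}(-c_2X_2+a_2)^{w_2}P\big(\frac{d_1X_1-b_1}{-c_1X_1+a_1},\frac{d_2X_2-b_2}{-c_2X_2+a_2}\big)$,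 extended linearly to $\mathbb Z[\Gamma^2]$; $V_{w_1,w_2}^{\mathbb Q}[I_D]=\{P\in V_{w_1,w_2}^{\mathbb Q}:[(1,1)+(S,S)].P=[(1,1)+(U,U)+(U^2,U^2)].P=0\}$. *)

(* Defs.v *)
From HB Require Import structures.
From mathcomp Require Import all_boot all_order all_algebra.
Set Implicit Arguments. Unset Strict Implicit. Unset Printing Implicit Defensive.
Import Order.TTheory GRing.Theory Num.Theory.
Local Open Scope ring_scope.

(* Elements of PSL_2(Z) are represented by integer 2x2 matrices
   g = [[a, b], [c, d]] (the sign ambiguity is irrelevant: w is even). *)
Definition mS : 'M[int]_2 := \matrix_(i < 2, j < 2)
  (if (i == 0) && (j == 1) then -1 else if (i == 1) && (j == 0) then 1 else 0).
Definition mU : 'M[int]_2 := \matrix_(i < 2, j < 2)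
  (if (i == 0) && (j == 1) then 1 else if (i == 1) && (j == 0) then -1
   else if (i == 1) && (j == 1) then 1 else 0).
Definition mU2 : 'M[int]_2 := mU *m mU.

Definition ga (g : 'M[int]_2) : int := g 0 0.
Definition gb (g : 'M[int]_2) : int := g 0 1.
Definition gc (g : 'M[int]_2) : int := g 1 0.
Definition gd (g : 'M[int]_2) : int := g 1 1.

(* (-cX+a)^w * ((dX-b)/(-cX+a))^i = (dX - b)^i (-cX + a)^(w-i), in R[X] *)
Definition mono {R : comNzRingType} (g : 'M[int]_2) (w i : nat) : {poly R} :=
  ((gd g)%:~R *: 'X - ((gb g)%:~R)%:P) ^+ i *
  (- ((gc g)%:~R *: 'X) + ((ga g)%:~R)%:P) ^+ (w - i).

Definition act {R : comNzRingType} (w : nat) (g : 'M[int]_2) (p : {poly R}) : {poly R} :=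
  \sum_(i < w.+1) p`_i *: mono g w i.

Definition inV (w : nat) (p : {poly rat}) : bool := (size p <= w.+1)%N.

Definition inW (w : nat) (p : {poly rat}) : Prop :=
  inV w p /\ p + act w mS p = 0 /\ p + act w mU p + act w mU2 p = 0.

(* Bivariate polynomials P(X1,X2) are {poly {poly rat}}: outer variable X1,
   inner variable X2. *)
Definition inV2 (w1 w2 : nat) (P : {poly {poly rat}}) : bool :=
  (size P <= w1.+1)%N && [forall i : 'I_w1.+1, (size (P`_i)%R <= w2.+1)%N].

Definition act2 (w1 w2 : nat) (g1 g2 : 'M[int]_2) (P : {poly {poly rat}})
  : {poly {poly rat}} :=
  \sum_(i < w1.+1) act w2 g2 P`_i *: mono g1 w1 i.

Definition inVID (w1 w2 : nat) (P : {poly {poly rat}}) : Prop :=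
  inV2 w1 w2 P /\ P + act2 w1 w2 mS mS P = 0 /\
  P + act2 w1 w2 mU mU P + act2 w1 w2 mU2 mU2 P = 0.

Definition diag (P : {poly {poly rat}}) : {poly rat} := P.['X].

Definition section (w1 w2 : nat) (a : nat -> rat) : {poly {poly rat}} :=
  \sum_(m1 < w1.+1) \sum_(m2 < w2.+1)
    ((((('C(w1, m1) * 'C(w2, m2))%:R * a (m1 + m2)%N) : rat)%:P)%:P *
      ((- 'X) ^+ (w1 - m1) * ((- 'X : {poly rat}) ^+ (w2 - m2))%:P)).

(* Main.v *)
Require Import Defs.
From HB Require Import structures.
From mathcomp Require Import all_boot all_order all_algebra.
From mathcomp Require Import ring zify.
Set Implicit Arguments. Unset Strict Implicit. Unset Printing Implicit Defensive.
Import Order.TTheory GRing.Theory Num.Theory.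
Local Open Scope ring_scope.

Section Gen.
Variable R : comNzRingType.

Lemma act_is_linear w g : linear (@act R w g).
Proof.
move=> c p q; rewrite /act scaler_sumr -big_split /=; apply: eq_bigr => i _.
by rewrite coefD coefZ scalerDl scalerA.
Qed.
HB.instance Definition _ w g := GRing.isLinear.Build R {poly R} {poly R} *:%R (@act R w g) (act_is_linear w g).

Lemma mono_map (S : comNzRingType) (f : {rmorphism R -> S}) g w i :
  map_poly f (mono g w i) = mono g w i.
Proof.
rewrite /mono !rmorph_int rmorphM !rmorphXn !rmorphD !rmorphN /= !map_polyZ map_polyX !rmorph_int.
by [].
Qed.

Lemma act_map (S : comNzRingType) (f : {rmorphism R -> S}) g w p :
  map_poly f (act w g p) = act w g (map_poly f p).
Proof.
rewrite /act rmorph_sum; apply: eq_bigr => i _ /=.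
by rewrite map_polyZ mono_map coef_map.
Qed.

Lemma act_Xn w g k : (k <= w)%N -> act w g 'X^k = mono g w k :> {poly R}.
Proof.
move=> kw; rewrite /act (bigD1 (Ordinal (kw : k < w.+1)%N)) //= coefXn eqxx scale1r.
rewrite big1 ?addr0 // => i /negbTE; rewrite coefXn.
by rewrite -val_eqE /= => ->; rewrite scale0r.
Qed.

End Gen.
Section Umb.
Variable (N : nat) (a : nat -> rat).
Local Notation R := {poly rat}.

Definition La (x : R) : rat := \sum_(i < N) x`_i * a i.

Lemma La_is_linear : scalar La.
Proof.
move=> c x y; rewrite /La mulr_sumr -big_split /=; apply: eq_bigr => i _.
by rewrite coefD coefZ mulrDl mulrA.
Qed.
HB.instance Definition _ := GRing.isLinear.Build rat R rat *%R La La_is_linear.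

Definition Lm (p : {poly R}) : {poly rat} := map_poly La p.
HB.instance Definition _ := GRing.Additive.copy Lm (map_poly La).
Definition Lm2 (P : {poly {poly R}}) : {poly {poly rat}} := map_poly Lm P.
HB.instance Definition _ := GRing.Additive.copy Lm2 (map_poly Lm).

Lemma La_MC x c : La (x * c%:P) = La x * c.
Proof. by rewrite /La mulr_suml; apply: eq_bigr => i _; rewrite coefMC mulrAC. Qed.

Lemma La_C c : La c%:P = (if (0 < N)%N then c * a 0 else 0).
Proof.
rewrite /La; case: N => [|n]; first by rewrite big_ord0.
by rewrite big_ord_recl coefC eqxx big1 ?addr0 // => i _; rewrite coefC /= mul0r.
Qed.

Lemma Lm_MC (B : {poly R}) (q : {poly rat}) :
  Lm (B * map_poly polyC q) = Lm B * q.
Proof.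
apply/polyP => j; rewrite /Lm coef_map !coefM raddf_sum /=.
by apply: eq_bigr => l _; rewrite coef_map coef_map /= La_MC.
Qed.

Lemma Lm_C c : Lm c%:P = (La c)%:P.
Proof. by rewrite /Lm map_polyC. Qed.

Lemma Lm2_CM (A : {poly R}) (M : {poly {poly rat}}) :
  Lm2 (A%:P * map_poly (map_poly polyC) M) = (Lm A)%:P * M.
Proof.
apply/polyP => k; rewrite /Lm2 coef_map !coefCM coef_map /=.
by rewrite Lm_MC.
Qed.

End Umb.
Definition act2g (S : comNzRingType) w1 w2 (g1 g2 : 'M[int]_2) (P : {poly {poly S}})
  : {poly {poly S}} := \sum_(i < w1.+1) act w2 g2 P`_i *: mono g1 w1 i.

Section Umb2.
Variable (N : nat) (a : nat -> rat).
Local Notation R := {poly rat}.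
Local Notation Lm := (Lm N a).
Local Notation Lm2 := (Lm2 N a).
Local Notation La := (La N a).

Lemma Lm_act w g (F : {poly R}) : Lm (act w g F) = act w g (Lm F).
Proof.
rewrite /act raddf_sum; apply: eq_bigr => i _.
rewrite /= -(mono_map polyC) -mul_polyC Lm_MC Lm_C mul_polyC.
by rewrite /Lm coef_map.
Qed.

Lemma Lm2_act2 w1 w2 g1 g2 (G : {poly {poly R}}) :
  Lm2 (act2g w1 w2 g1 g2 G) = act2 w1 w2 g1 g2 (Lm2 G).
Proof.
rewrite /act2g /act2 raddf_sum; apply: eq_bigr => i _.
rewrite /= -(mono_map (map_poly polyC)) -mul_polyC Lm2_CM mul_polyC.
by rewrite Lm_act /Lm2 coef_map.
Qed.
End Umb2.
Section Fuv.
Variable S : comNzRingType.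

Definition Fuv n (u v : S) : {poly S} := (u%:P - v *: 'X) ^+ n.

Lemma Fuv_expand n (u v : S) :
  Fuv n u v = \poly_(i < n.+1) ((u ^+ (n - i) * (- v) ^+ i) *+ 'C(n, i)).
Proof.
rewrite poly_def /Fuv exprDn; apply: eq_bigr => i _.
by rewrite -scaleNr exprZn -rmorphXn /= mul_polyC scalerA scalerMnl.
Qed.

Lemma coef_Fuv n (u v : S) k :
  (Fuv n u v)`_k = if (k <= n)%N then (u ^+ (n - k) * (- v) ^+ k) *+ 'C(n, k) else 0.
Proof. by rewrite Fuv_expand coef_poly ltnS. Qed.

Definition up g (u v : S) := (ga g)%:~R * u + (gb g)%:~R * v.
Definition vp g (u v : S) := (gc g)%:~R * u + (gd g)%:~R * v.

Lemma lin_id g (u v : S) :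
  (up g u v)%:P - vp g u v *: 'X =
  u *: (- ((gc g)%:~R *: 'X) + ((ga g)%:~R)%:P) +
  (- v) *: ((gd g)%:~R *: 'X - ((gb g)%:~R)%:P).
Proof.
rewrite /up /vp -!mul_polyC !(rmorphD, rmorphM, rmorphN, rmorphB) /=.
ring.
Qed.

Lemma actF n g (u v : S) : act n g (Fuv n u v) = Fuv n (up g u v) (vp g u v).
Proof.
rewrite {2}/Fuv lin_id exprDn /act; apply: eq_bigr => i _.
rewrite coef_Fuv -ltnS ltn_ord /mono !exprZn -scalerAl -scalerAr scalerA -scalerMnl mulrC.
by rewrite mulrC [_ * _ ^+ (n - i)]mulrC.
Qed.
End Fuv.
Section Guv.
Variable S : comNzRingType.

Definition Guv w1 w2 (u v : S) : {poly {poly S}} :=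
  map_poly polyC (Fuv w1 u v) * (Fuv w2 u v)%:P.

Lemma coef_Guv w1 w2 (u v : S) k1 k2 :
  ((Guv w1 w2 u v)`_k1)`_k2 = (Fuv w1 u v)`_k1 * (Fuv w2 u v)`_k2.
Proof. by rewrite /Guv coefMC coef_map /= coefCM. Qed.

Lemma act2g_split w1 w2 g (Q H : {poly S}) :
  act2g w1 w2 g g (map_poly polyC Q * H%:P) =
  map_poly polyC (act w1 g Q) * (act w2 g H)%:P.
Proof.
rewrite act_map /act2g [act w1 g _]/act mulr_suml; apply: eq_bigr => i _.
rewrite coefMC coef_map /= mul_polyC linearZ /=.
by rewrite -!mul_polyC polyCM mulrAC.
Qed.

Lemma actG w1 w2 g (u v : S) :
  act2g w1 w2 g g (Guv w1 w2 u v) = Guv w1 w2 (up g u v) (vp g u v).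
Proof. by rewrite /Guv act2g_split !actF. Qed.
End Guv.
Section Main.
Variables (w1 w2 : nat) (a : nat -> rat).
Local Notation w := (w1 + w2)%N.
Local Notation R := {poly rat}.
Local Notation Lm := (Lm w.+1 a).
Local Notation Lm2 := (Lm2 w.+1 a).
Local Notation La := (La w.+1 a).

Definition rr k1 k2 : rat :=
  if (k1 <= w1)%N && (k2 <= w2)%N then
    ('C(w1, k1) * 'C(w2, k2))%:R / ('C(w, k1 + k2))%:R else 0.

Lemma Guv_rel (u v : R) k1 k2 :
  ((Guv w1 w2 u v)`_k1)`_k2 = rr k1 k2 *: (Fuv w u v)`_(k1 + k2).
Proof.
rewrite coef_Guv !coef_Fuv /rr.
case: (leqP k1 w1) => h1; last by rewrite mul0r andFb scale0r.
case: (leqP k2 w2) => h2; last by rewrite mulr0 andbF scale0r.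
have hk : (k1 + k2 <= w)%N by rewrite leq_add.
rewrite hk /= -!scaler_nat scalerA mulfVK; last first.
  by rewrite pnatr_eq0 -lt0n bin_gt0.
rewrite -scalerAl -scalerAr scalerA natrM; congr (_ *: _).
have -> : (w - (k1 + k2) = (w1 - k1) + (w2 - k2))%N by lia.
by rewrite exprD exprD; ring.
Qed.

Lemma La_Z (c : rat) x : La (c *: x) = c * La x.
Proof. by rewrite /La mulr_sumr; apply: eq_bigr => i _; rewrite coefZ mulrA. Qed.

Lemma rel_lemma (Psi : {poly R}) (Phi : {poly {poly R}}) :
  (forall k1 k2, (Phi`_k1)`_k2 = rr k1 k2 *: Psi`_(k1 + k2)) ->
  Lm Psi = 0 -> Lm2 Phi = 0.
Proof.
move=> H H0; apply/polyP => k1; apply/polyP => k2.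
rewrite /Lm2 coef_map /= /Lm coef_map /= H La_Z !coef0.
have := congr1 (fun p : {poly rat} => p`_(k1 + k2)) H0.
by rewrite /= /Lm coef_map /= coef0 => ->; rewrite mulr0.
Qed.

End Main.
Section Main2.
Variables (w1 w2 : nat) (a : nat -> rat).
Local Notation w := (w1 + w2)%N.
Local Notation R := {poly rat}.
Local Notation Lm := (Lm w.+1 a).
Local Notation Lm2 := (Lm2 w.+1 a).
Local Notation La := (La w.+1 a).

Lemma Lm2_coef (G : {poly {poly R}}) k1 k2 : ((Lm2 G)`_k1)`_k2 = La ((G`_k1)`_k2).
Proof. by rewrite /Lm2 coef_map /= /Lm coef_map. Qed.

Lemma inV2_L2 (u v : R) : inV2 w1 w2 (Lm2 (Guv w1 w2 u v)).
Proof.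
rewrite /inV2; apply/andP; split.
  apply/leq_sizeP => j hj; apply/polyP => k.
  by rewrite coef0 Lm2_coef coef_Guv coef_Fuv leqNgt hj /= mul0r raddf0.
apply/forallP => i; apply/leq_sizeP => j hj.
by rewrite Lm2_coef coef_Guv [X in _ * X]coef_Fuv leqNgt hj /= mulr0 raddf0.
Qed.

Lemma diag_Lm2 (G : {poly {poly R}}) : diag (Lm2 G) = Lm (G.['X]).
Proof.
have hs : (size (Lm2 G) <= size G)%N.
  by apply/leq_sizeP => j hj; rewrite /Lm2 coef_map nth_default // raddf0.
rewrite /diag (horner_coef_wide _ hs) (@horner_coef_wide _ (size G) G) // raddf_sum.
apply: eq_bigr => i _.
rewrite /= -(map_polyXn (polyC : rat -> {poly rat}) i) Lm_MC.
by rewrite /Lm2 coef_map.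
Qed.

Lemma Guv_diag : (Guv w1 w2 ('X : R) 1).['X] = Fuv w 'X 1.
Proof.
have hc : forall q : {poly R}, (map_poly polyC q).['X] = q by move=> q; exact: comp_polyXr.
by rewrite /Guv hornerM hc hornerC /Fuv exprD.
Qed.

Lemma core (p : {poly rat}) : Lm (Fuv w ('X : R) 1) = p -> inW w p ->
  inVID w1 w2 (Lm2 (Guv w1 w2 ('X : R) 1)) /\ diag (Lm2 (Guv w1 w2 ('X : R) 1)) = p.
Proof.
move=> Hp [_ [hS hU]]; split; last by rewrite diag_Lm2 Guv_diag.
split; first exact: inV2_L2.
split.
  rewrite -Lm2_act2 actG -raddfD.
  apply: (rel_lemma (Psi := Fuv w 'X 1 + Fuv w (up mS 'X 1) (vp mS 'X 1))).
    by move=> k1 k2; rewrite !coefD !Guv_rel scalerDr.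
  by rewrite -actF raddfD /= Lm_act Hp.
rewrite -!Lm2_act2 !actG -!raddfD.
apply: (rel_lemma (Psi := Fuv w 'X 1 + Fuv w (up mU 'X 1) (vp mU 'X 1)
                          + Fuv w (up mU2 'X 1) (vp mU2 'X 1))).
  by move=> k1 k2; rewrite !coefD !Guv_rel !scalerDr.
by rewrite -!actF !raddfD /= !Lm_act Hp.
Qed.
End Main2.
Section Main3.
Variables (w1 w2 : nat) (a : nat -> rat).
Local Notation w := (w1 + w2)%N.
Local Notation R := {poly rat}.
Local Notation Lm := (Lm w.+1 a).
Local Notation Lm2 := (Lm2 w.+1 a).
Local Notation La := (La w.+1 a).

Lemma La_Xn m : (m < w.+1)%N -> La ('X^m) = a m.
Proof.
move=> hm; rewrite /La (bigD1 (Ordinal hm)) //= coefXn eqxx mul1r.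
rewrite big1 ?addr0 // => i /negbTE; rewrite coefXn.
by rewrite -val_eqE /= => ->; rewrite mul0r.
Qed.

Lemma Fuv_exp n :
  Fuv n ('X : R) 1 = \sum_(m < n.+1)
     (map_poly polyC ((- 'X : {poly rat}) ^+ (n - m)) * (('X : R) ^+ m)%:P) *+ 'C(n, m).
Proof.
rewrite /Fuv scale1r addrC exprDn; apply: eq_bigr => m _.
by rewrite rmorphXn rmorphN /= map_polyX rmorphXn.
Qed.

Lemma LmF : Lm (Fuv w ('X : R) 1) =
  \sum_(m < w.+1) ('C(w, m)%:R * a m) *: (- 'X) ^+ (w - m).
Proof.
rewrite Fuv_exp raddf_sum; apply: eq_bigr => m _.
rewrite raddfMn /= mulrC Lm_MC Lm_C La_Xn // mul_polyC scalerMnl.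
by rewrite -mulr_natl.
Qed.

Lemma section_eq : section w1 w2 a = Lm2 (Guv w1 w2 ('X : R) 1).
Proof.
rewrite /Guv !Fuv_exp rmorph_sum rmorph_sum mulr_suml raddf_sum.
apply: eq_bigr => m1 _; rewrite mulr_sumr raddf_sum; apply: eq_bigr => m2 _ /=.
set M := (- 'X : {poly {poly rat}}) ^+ (w1 - m1) * ((- 'X : {poly rat}) ^+ (w2 - m2))%:P.
have -> : map_poly polyC
      ((map_poly polyC ((- 'X : {poly rat}) ^+ (w1 - m1)) * (('X : R) ^+ m1)%:P) *+ 'C(w1, m1)) *
    ((map_poly polyC ((- 'X : {poly rat}) ^+ (w2 - m2)) * (('X : R) ^+ m2)%:P) *+ 'C(w2, m2))%:P
    = ((('X : R) ^+ (m1 + m2)) *+ ('C(w1, m1) * 'C(w2, m2)))%:P%:P *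
      map_poly (map_poly polyC) M.
  rewrite /M.
  do 8! rewrite ?rmorphMn ?rmorphM ?rmorphXn ?rmorphN ?rmorphD ?map_polyX ?map_polyC /=.
  rewrite exprD mulrnA.
  ring.
rewrite Lm2_CM /= Lm_C raddfMn /= La_Xn; last by have := ltn_ord m1; have := ltn_ord m2; lia.
by rewrite mulr_natl.
Qed.
End Main3.
Lemma size_sum_bound (m n : nat) (F : 'I_m -> {poly rat}) :
  (forall i, (size (F i) <= n)%N) -> (size (\sum_(i < m) F i)%R <= n)%N.
Proof.
move=> h; apply: (big_ind (fun q : {poly rat} => (size q <= n)%N)) => //.
  by rewrite size_poly0.
by move=> x y hx hy; apply: leq_trans (size_polyD x y) _; rewrite geq_max hx hy.
Qed.

Lemma poly_sum_le (p : {poly rat}) n : (size p <= n)%N -> p = \sum_(j < n) p`_j *: 'X^j.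
Proof.
move=> h; rewrite -poly_def; apply/polyP => j; rewrite coef_poly; case: ltnP => // hj.
by rewrite nth_default // (leq_trans h hj).
Qed.

Lemma mono_diag g w i : (mono g w i : {poly {poly rat}}).['X] = mono g w i.
Proof.
rewrite -[X in X.['X]](mono_map (polyC : rat -> {poly rat})); exact: comp_polyXr.
Qed.

Section Part1.
Variables (w1 w2 : nat).
Local Notation w := (w1 + w2)%N.

Lemma mono_split g i j : (i <= w1)%N -> (j <= w2)%N ->
  mono g w (j + i) = mono g w2 j * mono g w1 i :> {poly rat}.
Proof.
move=> hi hj; rewrite /mono.
have -> : (w - (j + i) = (w2 - j) + (w1 - i))%N by lia.
rewrite !exprD; ring.
Qed.

Lemma diag_exp P : inV2 w1 w2 P ->
  diag P = \sum_(i < w1.+1) \sum_(j < w2.+1) (P`_i)`_j *: 'X^(j + i).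
Proof.
case/andP => hP /forallP hPi.
rewrite /diag (horner_coef_wide _ hP); apply: eq_bigr => i _.
rewrite {1}(poly_sum_le (hPi i)) mulr_suml; apply: eq_bigr => j _.
by rewrite -scalerAl exprD.
Qed.

Lemma diag_size P : inV2 w1 w2 P -> inV w (diag P).
Proof.
move=> hV; rewrite /inV (diag_exp hV); apply: size_sum_bound => i.
apply: size_sum_bound => j; apply: leq_trans (size_scale_leq _ _) _.
by rewrite size_polyXn; have := ltn_ord i; have := ltn_ord j; lia.
Qed.

Lemma diag_act2 g P : inV2 w1 w2 P -> diag (act2 w1 w2 g g P) = act w g (diag P).
Proof.
move=> hV; rewrite (diag_exp hV); case/andP: hV => hP /forallP hPi.
rewrite /diag /act2 horner_sum linear_sum; apply: eq_bigr => i _ /=.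
rewrite hornerZ mono_diag {1}(poly_sum_le (hPi i)) !linear_sum mulr_suml /=.
apply: eq_bigr => j _.
have hi := ltn_ord i; have hj := ltn_ord j.
rewrite !linearZ /= act_Xn ?act_Xn ?mono_split -?scalerAl //; lia.
Qed.

Lemma diag_inW P : inVID w1 w2 P -> inW w (diag P).
Proof.
move=> [hV [hS hU]]; split; first exact: diag_size.
split.
  by rewrite -diag_act2 // /diag -hornerD hS horner0.
by rewrite -!diag_act2 // /diag -!hornerD hU horner0.
Qed.
End Part1.

Section Part2.
Variables (w1 w2 : nat) (p : {poly rat}).
Local Notation w := (w1 + w2)%N.
Definition a0 (m : nat) : rat := p`_(w - m) * (-1) ^+ (w - m) / ('C(w, w - m))%:R.

Lemma Lm_a0 : (size p <= w.+1)%N -> Lm w.+1 a0 (Fuv w ('X : {poly rat}) 1) = p.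
Proof.
move=> hs; apply/polyP => k; rewrite /Lm coef_map /= coef_Fuv; case: leqP => hk.
  have e : ((-1 : {poly rat}) ^+ k) = ((-1 : rat) ^+ k)%:P by rewrite rmorphXn rmorphN1.
  rewrite raddfMn /= e La_MC La_Xn; last by lia.
  rewrite /a0 subKn //.
  have hC : ('C(w, k)%:R : rat) != 0 by rewrite pnatr_eq0 -lt0n bin_gt0.
  have hs2 : ((-1) ^+ k * (-1) ^+ k = 1 :> rat) by rewrite -exprMn mulrNN mulr1 expr1n.
  by rewrite mulrAC -(mulrA (p`_k)) hs2 mulr1 -[LHS]mulr_natr divfK.
rewrite /La big1; last by move=> i _; rewrite coef0 mul0r.
by rewrite nth_default // (leq_trans hs hk).
Qed.
End Part2.

Theorem mainTheorem7 (w1 w2 : nat) (hw1 : (2 <= w1)%N) (hw2 : (2 <= w2)%N)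
    (e1 : ~~ odd w1) (e2 : ~~ odd w2) :
  (forall P : {poly {poly rat}}, inVID w1 w2 P -> inW (w1 + w2) (diag P)) /\
  (forall p : {poly rat}, inW (w1 + w2) p ->
     exists P : {poly {poly rat}}, inVID w1 w2 P /\ diag P = p) /\
  (forall (p : {poly rat}) (a : nat -> rat), inW (w1 + w2) p ->
     p = \sum_(m < (w1 + w2).+1)
           ('C(w1 + w2, m)%:R * a m) *: (- 'X) ^+ (w1 + w2 - m) ->
     inVID w1 w2 (section w1 w2 a) /\ diag (section w1 w2 a) = p).
Proof.
split; first exact: diag_inW.
split.
  move=> p hp; exists (Lm2 (w1 + w2).+1 (a0 w1 w2 p) (Guv w1 w2 ('X : {poly rat}) 1)).
  apply: core => //; apply: Lm_a0; by case: hp.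
move=> p a hp hform; rewrite section_eq; apply: core => //.
by rewrite LmF hform.
Qed.
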